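(* Let $n\geq 1$. For $0\leq k\leq n-1$ let $A_{n,k}$ be the set of pairs of nonnegative integers $(i,j)$ such that $$i\geq \frac{k(k+1)}{2},\qquad j\geq \frac{(n-k-1)(n-k)}{2},\qquad i+j\leq \frac{n(n-1)}{2},$$ and let $A_n=\bigcup_{k=0}^{n-1}A_{n,k}$. Then there exists a Gog triangle of size $n$ with exactly $i$ inversions and exactly $j$ coinversions if and only if $(i,j)\in A_n$. Moreover, if $i=\frac{k(k+1)}{2}$ and $j=\frac{(n-k-1)(n-k)}{2}$ for some $k\in\{0,\dots,n-1\}$, then there is a unique Gog triangle of size $n$ with $i$ inversions and $j$ coinversions, and its bottom entry $X_{1,1}$ equals $n-k$.
   Context: A Gelfand–Tsetlin triangle of size $n$ is an array $X=(X_{i,j})_{n\geq i\geq j\geq 1}$ of positive integers (row $i$ consists of $X_{i,1},\dots,X_{i,i}$; row $n$ is the top row and row $1$, consisting of the single entry $X_{1,1}$, is the bottom) such that $X_{i+1,j}\leq X_{i,j}\leq X_{i+1,j+1}$ for all $n-1\geq i\geq j\geq 1$. A Gog triangle of size $n$ is a Gelfand–Tsetlin triangle of size $n$ whose rows are strictly increasing ($X_{i,j}<X_{i,j+1}$) and whose top row is $X_{n,j}=j$ for $1\leq j\leq n$. An inversion of a Gog triangle $X$ is a pair $(i,j)$ (with $n-1\geq i\geq j\geq 1$) such that $X_{i,j}=X_{i+1,j}$; a coinversion is a pair $(i,j)$ such that $X_{i,j}=X_{i+1,j+1}$. *)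

(* Defs.v *)
From mathcomp Require Import all_boot.
Set Implicit Arguments. Unset Strict Implicit. Unset Printing Implicit Defensive.

(* A triangular array is modelled as X : nat -> nat -> nat, with X i j the
   entry X_{i,j}; only the entries with 1 <= j <= i <= n are meaningful. *)

Definition in_tri (n i j : nat) : bool := (1 <= j) && (j <= i) && (i <= n).

Definition GT_triangle (n : nat) (X : nat -> nat -> nat) : Prop :=
  (forall i j, in_tri n i j -> 0 < X i j) /\
  (forall i j, 1 <= j -> j <= i -> i <= n.-1 ->
     X i.+1 j <= X i j /\ X i j <= X i.+1 j.+1).

Definition Gog (n : nat) (X : nat -> nat -> nat) : Prop :=
  GT_triangle n X /\
  (forall i j, 1 <= j -> j < i -> i <= n -> X i j < X i j.+1) /\
  (forall j, 1 <= j -> j <= n -> X n j = j).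

Definition inversions (n : nat) (X : nat -> nat -> nat) : nat :=
  \sum_(1 <= i < n) \sum_(1 <= j < i.+1) (X i j == X i.+1 j).

Definition coinversions (n : nat) (X : nat -> nat -> nat) : nat :=
  \sum_(1 <= i < n) \sum_(1 <= j < i.+1) (X i j == X i.+1 j.+1).

Definition in_A_nk (n k i j : nat) : Prop :=
  (k * k.+1)./2 <= i /\ ((n - k - 1) * (n - k))./2 <= j /\
  i + j <= (n * (n - 1))./2.

Definition in_A (n i j : nat) : Prop := exists2 k, k <= n - 1 & in_A_nk n k i j.

(* Main.v *)
Require Import Defs.
From mathcomp Require Import all_boot zify.
Set Implicit Arguments. Unset Strict Implicit. Unset Printing Implicit Defensive.

Definition S n (F : nat -> nat -> nat) := \sum_(1 <= i < n) \sum_(1 <= j < i.+1) F i j.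
Lemma S_rec n F : S n.+1 F = S n F + \sum_(1 <= j < n.+1) F n j.
Proof.
rewrite /S; case: n => [|n]; first by rewrite !big_geq.
by rewrite big_nat_recr.
Qed.
Lemma SL n F : S n.+1 F = \sum_(1 <= i < n.+1) F i 1 + S n (fun i j => F i.+1 j.+1).
Proof.
elim: n => [|n IH]; first by rewrite /S !big_geq.
rewrite (S_rec n.+1 F) IH (S_rec n).
rewrite (big_nat_recl n.+1 1) //.
rewrite (big_nat_recr n.+1 1 (fun i => F i 1)) //=.

lia.
Qed.
Lemma SR n F : S n.+1 F = \sum_(1 <= i < n.+1) F i i + S n (fun i j => F i.+1 j).
Proof.
elim: n => [|n IH]; first by rewrite /S !big_geq.
rewrite (S_rec n.+1 F) IH (S_rec n).
rewrite (big_nat_recr n.+1 1 (F n.+1)) //=.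
rewrite (big_nat_recr n.+1 1 (fun i => F i i)) //=.
lia.
Qed.

Lemma chain_dec (f : nat -> nat) lo hi : lo <= hi ->
  (forall i, lo <= i -> i < hi -> f i.+1 <= f i) ->
  f hi <= f lo /\ hi - lo <= \sum_(lo <= i < hi) (f i == f i.+1) + (f lo - f hi).
Proof.
elim: hi => [|hi IH] Hle Hm.
  by move: Hle; rewrite leqn0 => /eqP->; rewrite big_geq.
case: (ltngtP lo hi.+1) Hle => // [Hlt|<-] _; last by rewrite big_geq // subnn.
have [H1 H2] := IH Hlt (fun i a b => Hm i a (ltnW b)).
have H3 := Hm hi Hlt (ltnSn _).
rewrite big_nat_recr //=.
case: eqP => E; lia.
Qed.

Lemma chain_inc (f : nat -> nat) lo hi : lo <= hi ->
  (forall i, lo <= i -> i < hi -> f i <= f i.+1) ->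
  f lo <= f hi /\ hi - lo <= \sum_(lo <= i < hi) (f i == f i.+1) + (f hi - f lo).
Proof.
elim: hi => [|hi IH] Hle Hm.
  by move: Hle; rewrite leqn0 => /eqP->; rewrite big_geq.
case: (ltngtP lo hi.+1) Hle => // [Hlt|<-] _; last by rewrite big_geq // subnn.
have [H1 H2] := IH Hlt (fun i a b => Hm i a (ltnW b)).
have H3 := Hm hi Hlt (ltnSn _).
rewrite big_nat_recr //=.
case: eqP => E; lia.
Qed.

Lemma chain_dec_mid (f : nat -> nat) lo hi i : lo <= i -> i <= hi ->
  (forall i, lo <= i -> i < hi -> f i.+1 <= f i) -> f hi <= f i /\ f i <= f lo.
Proof.
move=> H1 H2 Hm; split.
  by case: (chain_dec (f := f) H2 (fun k a b => Hm k (leq_trans H1 a) b)).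
by case: (chain_dec (f := f) H1 (fun k a b => Hm k a (leq_trans b H2))).
Qed.

Lemma chain_inc_mid (f : nat -> nat) lo hi i : lo <= i -> i <= hi ->
  (forall i, lo <= i -> i < hi -> f i <= f i.+1) -> f lo <= f i /\ f i <= f hi.
Proof.
move=> H1 H2 Hm; split.
  by case: (chain_inc (f := f) H1 (fun k a b => Hm k a (leq_trans b H2))).
by case: (chain_inc (f := f) H2 (fun k a b => Hm k (leq_trans H1 a) b)).
Qed.

Definition interl n (X : nat -> nat -> nat) := forall i j, 1 <= j -> j <= i -> i <= n.-1 ->
  X i.+1 j <= X i j /\ X i j <= X i.+1 j.+1.
Definition toprow n c (X : nat -> nat -> nat) := forall j, 1 <= j -> j <= n -> X n j = j + c.

Lemma invE n X : inversions n X = S n (fun i j => X i j == X i.+1 j). Proof. by []. Qed.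
Lemma coinvE n X : coinversions n X = S n (fun i j => X i j == X i.+1 j.+1). Proof. by []. Qed.

Section Dec.
Variables (n c : nat) (X : nat -> nat -> nat).
Hypothesis HI : interl n.+1 X.
Hypothesis HT : toprow n.+1 c X.
Let XL := fun i j => X i.+1 j.+1.
Let XR := fun i j => X i.+1 j.

Lemma interl_L : interl n XL.
Proof. move=> i j H1 H2 H3; apply: HI => //; lia. Qed.
Lemma interl_R : interl n XR.
Proof. move=> i j H1 H2 H3; apply: HI => //; lia. Qed.
Lemma toprow_L : toprow n c.+1 XL.
Proof. move=> j H1 H2; rewrite /XL HT //; lia. Qed.
Lemma toprow_R : toprow n c XR.
Proof. move=> j H1 H2; rewrite /XR HT //; lia. Qed.

Lemma invL : inversions n.+1 X = \sum_(1 <= i < n.+1) (X i 1 == X i.+1 1) + inversions n XL.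
Proof. by rewrite invE SL. Qed.
Lemma coinvL : coinversions n.+1 X = \sum_(1 <= i < n.+1) (X i 1 == X i.+1 2) + coinversions n XL.
Proof. by rewrite coinvE SL. Qed.
Lemma invR : inversions n.+1 X = \sum_(1 <= i < n.+1) (X i i == X i.+1 i) + inversions n XR.
Proof. by rewrite invE SR. Qed.
Lemma coinvR : coinversions n.+1 X = \sum_(1 <= i < n.+1) (X i i == X i.+1 i.+1) + coinversions n XR.
Proof. by rewrite coinvE SR. Qed.

Lemma col_dec : forall i, 1 <= i -> i < n.+1 -> X i.+1 1 <= X i 1.
Proof. move=> i H1 H2; case: (HI (i:=i) (j:=1)) => //; lia. Qed.
Lemma diag_inc : forall i, 1 <= i -> i < n.+1 -> X i i <= X i.+1 i.+1.
Proof. move=> i H1 H2; case: (HI (i:=i) (j:=i)) => //; lia. Qed.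

Lemma LCb : 1 + c <= X 1 1 /\
  n <= \sum_(1 <= i < n.+1) (X i 1 == X i.+1 1) + (X 1 1 - (1 + c)).
Proof.
have [H1 H2] := chain_dec (f := fun i => X i 1) (lo := 1) (hi := n.+1) (ltn0Sn _) col_dec.
rewrite HT // in H1 H2; split => //; lia.
Qed.

Lemma RDb : X 1 1 <= n.+1 + c /\
  n <= \sum_(1 <= i < n.+1) (X i i == X i.+1 i.+1) + (n.+1 + c - X 1 1).
Proof.
have [H1 H2] := chain_inc (f := fun i => X i i) (lo := 1) (hi := n.+1) (ltn0Sn _) diag_inc.
rewrite HT // in H1 H2; split => //; lia.
Qed.

End Dec.
Lemma C2S x : 'C(x.+1,2) = 'C(x,2) + x.
Proof. by rewrite binS bin1. Qed.

Lemma stair n : forall c X, interl n X -> toprow n c X -> forall a, 1 <= a -> a < n ->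
  'C(a.+1,2) <= inversions n X \/ 'C(n.+1 - a,2) <= coinversions n X.
Proof.
elim: n => [|n IH] c X HI HT a Ha1 Ha2; first lia.
have [L1 L2] := LCb HI HT. have [R1 R2] := RDb HI HT.
have EiL := invL n X. have EcL := coinvL n X.
have EiR := invR n X. have EcR := coinvR n X.
set Lc := \sum_(1 <= i < n.+1) (X i 1 == X i.+1 1) in L2 EiL.
set Lc' := \sum_(1 <= i < n.+1) (X i 1 == X i.+1 2) in EcL.
set Rd := \sum_(1 <= i < n.+1) (X i i == X i.+1 i.+1) in R2 EcR.
set Rd' := \sum_(1 <= i < n.+1) (X i i == X i.+1 i) in EiR.
have CS := C2S.
case: (leqP a (n.+1 + c - X 1 1)) => Hcase.
- case: (ltngtP a 1) => Ha; first lia.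
  + have := IH c.+1 _ (interl_L HI) (toprow_L HT) a.-1.
    case; [lia|lia|move=> H|move=> H].
    * left; rewrite EiL; have := CS a; rewrite (_ : a.-1.+1 = a) in H; lia.
    * right; rewrite EcL; have -> : n.+2 - a = n.+1 - a.-1 by lia.
      lia.
  + subst a; left; rewrite EiL (_ : 'C(2,2) = 1) //; lia.
- case: (ltngtP a n) => Ha; last first.
  + subst a; right; rewrite EcR; have -> : n.+2 - n = 2 by lia.
    rewrite (_ : 'C(2,2) = 1) //; lia.
  + lia.
  + have := IH c _ (interl_R HI) (toprow_R HT) a.
    case; [lia|lia|move=> H|move=> H].
    * left; rewrite EiR; lia.
    * right; rewrite EcR; have -> : n.+2 - a = (n.+1 - a).+1 by lia.
      rewrite CS; lia.
Qed.

Lemma S_le n F G : (forall i j, 1 <= j -> j <= i -> i < n -> F i j <= G i j) -> S n F <= S n G.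
Proof.
move=> H; rewrite /S big_nat [X in _ <= X]big_nat; apply: leq_sum => i /andP[H1 H2].
rewrite big_nat [X in _ <= X]big_nat; apply: leq_sum => j /andP[H3 H4]; apply: H => //.
Qed.

Lemma S_add n F G : S n F + S n G = S n (fun i j => F i j + G i j).
Proof. rewrite /S -big_split; apply: eq_bigr => i _; by rewrite -big_split. Qed.

Lemma S_one n : S n (fun _ _ => 1) = 'C(n,2).
Proof.
elim: n => [|n IH]; first by rewrite /S big_geq.
rewrite S_rec IH sum_nat_const_nat C2S; lia.
Qed.

Lemma gog_sum n X : Gog n X -> inversions n X + coinversions n X <= 'C(n,2).
Proof.
case=> [[_ HI] [HS _]]; rewrite invE coinvE S_add -S_one; apply: S_le => i j H1 H2 H3.
have H4 := HS i.+1 j H1 (leq_ltn_trans H2 (ltnSn _)) H3.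
case: (X i j =P X i.+1 j) => E1; case: (X i j =P X i.+1 j.+1) => E2 //=; lia.
Qed.

Lemma h1 k : (k * k.+1)./2 = 'C(k.+1,2). Proof. by rewrite bin2 /= mulnC. Qed.
Lemma h2 n k : ((n - k - 1) * (n - k))./2 = 'C(n-k,2). Proof. by rewrite bin2 subn1 mulnC. Qed.
Lemma h3 n : (n * (n - 1))./2 = 'C(n,2). Proof. by rewrite bin2 subn1. Qed.

Lemma gog_interl n X : Gog n X -> interl n X.
Proof. by case=> [[_ HI] _]. Qed.
Lemma gog_top n X : Gog n X -> toprow n 0 X.
Proof. by case=> [_ [_ HT]] j H1 H2; rewrite HT // addn0. Qed.

Lemma gog_inA n X : 1 <= n -> Gog n X -> in_A n (inversions n X) (coinversions n X).
Proof.
move=> Hn HG.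
have St := stair (gog_interl HG) (gog_top HG).
have Hs := gog_sum HG.
set I := inversions n X in St Hs *; set J := coinversions n X in St Hs *.
suff: forall t a, a + t = n - 1 -> 'C(a.+1,2) <= I ->
  exists2 k, k <= n - 1 & 'C(k.+1,2) <= I /\ 'C(n-k,2) <= J.
  move=> /(_ (n - 1) 0) []; [lia| by [] | move=> k Hk [H1 H2]].
  exists k => //; rewrite /in_A_nk h1 h2 h3; lia.
elim=> [|t IH] a Ha HI.
  exists a; first lia. split => //. rewrite (_ : n - a = 1); [by [] | lia].
case: (leqP 'C(a.+2,2) I) => H.
  by apply: (IH a.+1) => //; lia.
exists a; first lia; split => //.
case: (St a.+1); [lia|lia|lia|].
by rewrite (_ : n.+1 - a.+1 = n - a) //; lia.
Qed.

Lemma cnt_le N a : \sum_(1 <= i < N) (i <= a) = minn a N.-1.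
Proof.
elim: N => [|N IH]; first by rewrite big_geq //; lia.
case: N IH => [|N] IH; first by rewrite big_geq //; lia.
rewrite big_nat_recr //= IH; case: leqP => H /=; lia.
Qed.

Lemma cnt_ge N b : 1 <= b -> \sum_(1 <= i < N) (b <= i) = N - b.
Proof.
move=> Hb; elim: N => [|N IH]; first by rewrite big_geq.
case: N IH => [|N] IH; first by rewrite big_geq //; lia.
rewrite big_nat_recr //= IH; case: leqP => H /=; lia.
Qed.

Lemma S_ext n F G : (forall i j, 1 <= j -> j <= i -> i < n -> F i j = G i j) -> S n F = S n G.
Proof.
move=> H; rewrite /S; apply: eq_big_nat => i /andP[H1 H2].
apply: eq_big_nat => j /andP[H3 H4]; apply: H => //.
Qed.

Definition St m be (Y : nat -> nat -> nat) :=
 [/\ Gog m Y, 1 <= be <= m,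
  (forall i, 1 <= i -> i < be -> Y i i < Y i.+1 i.+1),
  (forall i, be <= i -> i <= m -> Y i i = m) &
  (forall i, 1 <= i -> i < be -> Y i i < m)].

Lemma step m be Y a b : St m be Y -> 1 <= b <= m.+1 -> a < b -> b <= be.+1 ->
  (b = be.+1 -> a = be) ->
  exists X, [/\ St m.+1 b X, inversions m.+1 X = inversions m Y + a &
                coinversions m.+1 X = coinversions m Y + (m.+1 - b)].
Proof.
move=> [HG Hbe Hstr Hcst Hlt] Hb Hab Hbb Hbe1.
have [[HP HI] [HS HT]] := HG.
pose r i := if i <= a then Y i i else if i < b then (Y i i).+1 else m.+1.
pose X i j := if j < i then Y i.-1 j else r i.
have Hy : forall i, 1 <= i -> i <= m ->
    (i < be /\ Y i i < m) \/ (be <= i /\ Y i i = m).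
  move=> i H1 H2; case: (ltnP i be) => H; [left; split => //; exact: Hlt|right; split => //; exact: Hcst].
have Hyp : forall i, 1 <= i -> i <= m -> 0 < Y i i.
  move=> i H1 H2; apply: HP; rewrite /in_tri H1 leqnn H2 //=.
have F1 : forall i, 1 <= i -> i <= m -> Y i i <= r i.
  move=> i H1 H2; rewrite /r; case: (leqP i a) => // _; case: (ltnP i b) => // _; have := Hy i H1 H2; lia.
have F3 : forall i, b <= i -> r i = m.+1.
  move=> i H; rewrite /r; case: (leqP i a) => H1; first lia; case: (ltnP i b) => //; lia.
have F2 : forall i, 1 <= i -> i < b -> r i <= m /\ r i < r i.+1.
  move=> i H1 H2; have H2' : i <= m by lia.
  have E1 := Hy i H1 H2'.
  case: (ltnP i.+1 b) => H3.
    have H3' : i.+1 <= m by lia.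
    have E2 := Hy i.+1 (ltn0Sn _) H3'.
    have E3 : i < be by lia.
    have E4 := Hstr i H1 E3.
    rewrite /r; case: (leqP i a) => H4; case: (leqP i.+1 a) => H5; case: (ltnP i b) => H6; case: (ltnP i.+1 b) => H7; lia.
  rewrite (F3 i.+1 H3) /r; case: (leqP i a) => H4; case: (ltnP i b) => H6; lia.
have F6 : forall i, 1 <= i -> i <= m -> Y i i < r i.+1.
  move=> i H1 H2; case: (ltnP i.+1 b) => H3; last by rewrite F3 //; have := Hy i H1 H2; lia.
  have E3 : i < be by lia.
  have E4 := Hstr i H1 E3.
  have Hi1 : i.+1 <= m by lia.
  have := F1 i.+1 (ltn0Sn _) Hi1.
  lia.
have F4 : forall i, 1 <= i -> i <= m -> (r i == Y i i) = (i <= a).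
  move=> i H1 H2; have := Hy i H1 H2; rewrite /r; case: (leqP i a) => H4; first by rewrite eqxx.
  case: (ltnP i b) => H5 H; apply/eqP; lia.
have F5 : forall i, 1 <= i -> i <= m -> (r i == r i.+1) = (b <= i).
  move=> i H1 H2; case: (ltnP i b) => H.
    have [_ H'] := F2 i H1 H; apply/eqP; lia.
  by rewrite !F3 //; lia.
have Hrm : r m.+1 = m.+1 by rewrite F3 //; lia.
have GX : Gog m.+1 X.
  split; [split|split].
  - move=> i j; rewrite /in_tri /X => /andP[/andP[H1 H2] H3].
    case: (ltnP j i) => H4.
      apply: HP; rewrite /in_tri H1 /=; lia.
    have Hi : 0 < i by lia.
    case: (ltnP i m.+1) => H5; first by have := F1 i Hi H5; have := Hyp i Hi H5; lia.
    have -> : i = m.+1 by lia. by rewrite Hrm.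
  - move=> i j H1 H2 H3; rewrite /X /=.
    rewrite (_ : j < i.+1 = true); last by lia.
    case: (ltnP j i) => H4.
      have := HI i.-1 j H1 ltac:(lia) ltac:(lia).
      rewrite (_ : i.-1.+1 = i); last by lia.
      rewrite (_ : j.+1 < i.+1 = true) //; lia.
    have Ej : j = i by lia. subst j.
    rewrite ltnn; split; first by apply: F1 => //.
    case: (ltnP i b) => H5; first by have := F2 i H1 H5; lia.
    by rewrite !F3 //; lia.
  - move=> i j H1 H2 H3; rewrite /X H2.
    case: (ltnP j.+1 i) => H4.
      have := HS i.-1 j ltac:(lia) ltac:(lia) ltac:(lia); lia.
    have Ej : i = j.+1 by lia. subst i.
    have := F6 j H1 ltac:(lia); by [].
  - move=> j H1 H2; rewrite /X; case: (ltnP j m.+1) => H3.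
      by rewrite /= HT //; lia.
    have -> : j = m.+1 by lia. by [].
have XL1 : forall i, X i i = r i by move=> i; rewrite /X ltnn.
have XL2 : forall i, X i.+1 i = Y i i by move=> i; rewrite /X ltnSn.
exists X; split.
- split => //.
  + by move=> i H1 H2; rewrite !XL1; have := F2 i H1 H2; lia.
  + by move=> i H1 H2; rewrite XL1 F3.
  + by move=> i H1 H2; rewrite XL1; have := F2 i H1 H2; lia.
- rewrite invR.
  have -> : \sum_(1 <= i < m.+1) (X i i == X i.+1 i) = \sum_(1 <= i < m.+1) (i <= a).
    by apply: eq_big_nat => i /andP[H1 H2]; rewrite XL1 XL2 F4.
  rewrite cnt_le (_ : minn a m.+1.-1 = a); last by lia.
  rewrite addnC; congr (_ + _).
  rewrite !invE; apply: S_ext => i j H1 H2 H3.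
  have h1 : j < i.+1 by lia.
  have h2 : j < i.+2 by lia.
  by rewrite /X h1 h2.
- rewrite coinvR.
  have -> : \sum_(1 <= i < m.+1) (X i i == X i.+1 i.+1) = \sum_(1 <= i < m.+1) (b <= i).
    by apply: eq_big_nat => i /andP[H1 H2]; rewrite !XL1 F5.
  rewrite cnt_ge; last by lia.
  rewrite addnC; congr (_ + _).
  rewrite !coinvE; apply: S_ext => i j H1 H2 H3.
  have h1 : j < i.+1 by lia.
  have h2 : j.+1 < i.+2 by lia.
  by rewrite /X h1 h2.
Qed.

Lemma growth k : exists Y, [/\ St k.+1 k.+1 Y, inversions k.+1 Y = 'C(k.+1,2) & coinversions k.+1 Y = 0].
Proof.
elim: k => [|k [Y [HS HI HC]]].
  exists (fun _ _ => 1); split; last by rewrite /coinversions big_geq.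
  - have G : Gog 1 (fun _ _ => 1).
      split; first split.
      + by [].
      + move=> i j H1 H2 H3; lia.
      + split; first by move=> i j H1 H2 H3; lia.
        move=> j H1 H2; lia.
    split => //; move=> i H1 H2; lia.
  - by rewrite /inversions big_geq.
have [X [HX H1 H2]] := step (a := k.+1) (b := k.+2) HS ltac:(lia) ltac:(lia) ltac:(lia) ltac:(lia).
exists X; split => //.
- by rewrite H1 HI (C2S k.+1).
- by rewrite H2 HC subnn.
Qed.

Lemma phase2 k t : forall P Q, P + Q <= k * t -> exists be, exists Y,
  [/\ St (k.+1 + t) be Y, inversions (k.+1 + t) Y = 'C(k.+1,2) + P,
      coinversions (k.+1 + t) Y = 'C(t.+1,2) + Q & (Q = 0 -> be = k.+1)].
Proof.
elim: t => [|t IH] P Q HPQ.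
  have [Y [HS HI HC]] := growth k.
  exists k.+1, Y; rewrite addn0; split => //.
  - rewrite HI; lia.
  - rewrite HC (_ : 'C(1,2) = 0) //; lia.
pose e := minn Q k. pose a := minn P (k - e).
have HPQ' : (P - a) + (Q - e) <= k * t by rewrite mulnS in HPQ; lia.
have [be [Y [HS HI HC HQ]]] := IH _ _ HPQ'.
have Hbe : 1 <= be by case: HS => _ /andP[].
have Hb : k.+1 - e <= be.
  case: (Q - e =P 0) => E; first by rewrite (HQ E); lia.
  have -> : e = k by rewrite /e; lia.
  by rewrite subSnn.
have [X [HX H1 H2]] := step (a := a) (b := k.+1 - e) HS ltac:(lia) ltac:(lia) ltac:(lia) ltac:(lia).
exists (k.+1 - e), X.
rewrite addnS; split => //.
- rewrite H1 HI; lia.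
- rewrite H2 HC (C2S t.+1); lia.
- move=> EQ; rewrite /e EQ; lia.
Qed.

Lemma binid k t : 'C(k.+1 + t, 2) = 'C(k.+1,2) + 'C(t.+1,2) + k * t.
Proof.
elim: t => [|t IH]; first by rewrite addn0 muln0 addn0 /=; rewrite addn0.
rewrite addnS (C2S (k.+1 + t)) IH (C2S t.+1) mulnS; lia.
Qed.

Lemma exist_A n I J : 1 <= n -> in_A n I J ->
  exists X, [/\ Gog n X, inversions n X = I & coinversions n X = J].
Proof.
move=> Hn [k Hk [H1 [H2 H3]]].
rewrite h1 in H1; rewrite h2 in H2; rewrite h3 in H3.
have [t En] : exists t, n = k.+1 + t by exists (n - 1 - k); lia.
subst n.
have Hb := binid k t.
have Et : k.+1 + t - k = t.+1 by lia.
rewrite Et in H2.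
have [be [Y [[HG _ _ _ _] HI HC _]]] := phase2 (k := k) (t := t) (P := I - 'C(k.+1,2)) (Q := J - 'C(t.+1,2)) ltac:(lia).
exists Y; split => //; lia.
Qed.

Lemma exist_corner n k : k <= n - 1 -> 1 <= n ->
  exists X, [/\ Gog n X, inversions n X = 'C(k.+1,2) & coinversions n X = 'C(n-k,2)].
Proof.
move=> Hk Hn.
have [t En] : exists t, n = k.+1 + t by exists (n - 1 - k); lia.
subst n.
have [be [Y [[HG _ _ _ _] HI HC _]]] := phase2 (k := k) (t := t) (P := 0) (Q := 0) ltac:(lia).
exists Y; split => //; first lia.
rewrite HC addn0; congr 'C(_,2); lia.
Qed.

Definition cond n c X k := [/\ interl n X, toprow n c X,
  inversions n X <= 'C(k.+1,2) & coinversions n X <= 'C(n-k,2)].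

Lemma C01 x : x <= 1 -> 'C(x,2) = 0.
Proof. by case: x => [|[|x]]. Qed.

Lemma bottom n c X k : k <= n -> cond n.+1 c X k -> X 1 1 = n.+1 - k + c.
Proof.
move=> Hk [HI HT Hi Hc].
case: n Hk HI HT Hi Hc => [|n] Hk HI HT Hi Hc.
  by rewrite (HT 1) //; lia.
have [L1 L2] := LCb HI HT. have [R1 R2] := RDb HI HT.
have EiL := invL n.+1 X. have EcL := coinvL n.+1 X.
have EiR := invR n.+1 X. have EcR := coinvR n.+1 X.
set Lc := \sum_(1 <= i < n.+2) (X i 1 == X i.+1 1) in L2 EiL.
set Lc' := \sum_(1 <= i < n.+2) (X i 1 == X i.+1 2) in EcL.
set Rd := \sum_(1 <= i < n.+2) (X i i == X i.+1 i.+1) in R2 EcR.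
set Rd' := \sum_(1 <= i < n.+2) (X i i == X i.+1 i) in EiR.
have CSk := C2S k.
case: (ltngtP (X 1 1) (n.+2 - k + c)) => // Hm.
- case: (leqP k 1) => Hk1.
    rewrite (C01 (x := k)) in CSk; lia.
  have := stair (interl_L HI) (toprow_L HT) (a := k.-1) ltac:(lia) ltac:(lia).
  rewrite (_ : k.-1.+1 = k); last by lia.
  rewrite (_ : n.+2 - k.-1 = (n.+2 - k).+1); last by lia.
  rewrite C2S. lia.
- case: (leqP n k) => Hk1.
    have [E|E] : n.+2 - k = 1 \/ n.+2 - k = 2 by lia.
      by rewrite E (_ : 'C(1,2) = 0) // in Hc; lia.
    by rewrite E (_ : 'C(2,2) = 1) // in Hc; lia.
  have := stair (interl_R HI) (toprow_R HT) (a := k.+1) ltac:(lia) ltac:(lia).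
  rewrite (_ : n.+2 - k = (n.+1 - k).+1) in Hc; last by lia.
  rewrite (_ : n.+2 - k.+1 = n.+1 - k); last by lia.
  rewrite C2S in Hc. rewrite C2S. lia.
Qed.

Lemma sub_conds n c X k : k <= n -> cond n.+1 c X k ->
  (1 <= k -> cond n c.+1 (fun i j => X i.+1 j.+1) k.-1) /\
  (k < n -> cond n c (fun i j => X i.+1 j) k).
Proof.
move=> Hk HC; have HB := bottom Hk HC; case: HC => HI HT Hi Hc.
have [L1 L2] := LCb HI HT. have [R1 R2] := RDb HI HT.
have EiL := invL n X. have EcL := coinvL n X.
have EiR := invR n X. have EcR := coinvR n X.
set Lc := \sum_(1 <= i < n.+1) (X i 1 == X i.+1 1) in L2 EiL.
set Lc' := \sum_(1 <= i < n.+1) (X i 1 == X i.+1 2) in EcL.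
set Rd := \sum_(1 <= i < n.+1) (X i i == X i.+1 i.+1) in R2 EcR.
set Rd' := \sum_(1 <= i < n.+1) (X i i == X i.+1 i) in EiR.
split => Hk1.
- split; [exact: interl_L | exact: toprow_L | |].
  + rewrite (_ : k.-1.+1 = k); last by lia.
    have := C2S k; lia.
  + rewrite (_ : n - k.-1 = n.+1 - k); last by lia. lia.
- split; [exact: interl_R | exact: toprow_R | lia |].
  rewrite (_ : n.+1 - k = (n - k).+1) in Hc; last by lia.
  rewrite C2S in Hc; lia.
Qed.

Lemma uniq_corner n : forall k c X c' Y, k <= n -> cond n.+1 c X k -> cond n.+1 c' Y k ->
  forall i j, in_tri n.+1 i j -> X i j + c' = Y i j + c.
Proof.
elim: n => [|n IH] k c X c' Y Hk HX HY i j Ht.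
  have [Ei Ej] : i = 1 /\ j = 1 by move: Ht; rewrite /in_tri; lia.
  subst; case: HX => _ HTX _ _; case: HY => _ HTY _ _.
  rewrite HTX // HTY //; lia.
have BX := bottom Hk HX. have BY := bottom Hk HY.
have [SX1 SX2] := sub_conds Hk HX. have [SY1 SY2] := sub_conds Hk HY.
move: Ht; rewrite /in_tri => /andP[/andP[H1 H2] H3].
case: (ltngtP i 1) => Hi; first lia; last first.
  subst i; have -> : j = 1 by lia. rewrite BX BY; lia.
case: (leqP 2 j) => Hj.
  case: (leqP 1 k) => Hk1.
    have := IH k.-1 c.+1 _ c'.+1 _ ltac:(lia) (SX1 Hk1) (SY1 Hk1) i.-1 j.-1.
    rewrite (_ : i.-1.+1 = i); last by lia.
    rewrite (_ : j.-1.+1 = j); last by lia.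
    move=> H; have := H ltac:(rewrite /in_tri; lia); lia.
  case: (ltnP j i) => Hji.
    have := IH k c _ c' _ ltac:(lia) (SX2 ltac:(lia)) (SY2 ltac:(lia)) i.-1 j.
    rewrite (_ : i.-1.+1 = i); last by lia.
    move=> H; have := H ltac:(rewrite /in_tri; lia); lia.
  have Eij : j = i by lia. subst j.
  case: HX => HIX HTX _ _; case: HY => HIY HTY _ _.
  have [A1 A2] := chain_inc_mid (f := fun i => X i i) (lo := 1) (hi := n.+2) (i := i)
     ltac:(lia) ltac:(lia) (diag_inc HIX).
  have [A3 A4] := chain_inc_mid (f := fun i => Y i i) (lo := 1) (hi := n.+2) (i := i)
     ltac:(lia) ltac:(lia) (diag_inc HIY).
  rewrite /= HTX // in A2; rewrite /= HTY // in A4; lia.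
have Ej : j = 1 by lia. subst j.
case: (ltnP k n.+1) => Hk1.
  have := IH k c _ c' _ ltac:(lia) (SX2 Hk1) (SY2 Hk1) i.-1 1.
  rewrite (_ : i.-1.+1 = i); last by lia.
  move=> H; have := H ltac:(rewrite /in_tri; lia); lia.
case: HX => HIX HTX _ _; case: HY => HIY HTY _ _.
have [A1 A2] := chain_dec_mid (f := fun i => X i 1) (lo := 1) (hi := n.+2) (i := i)
   ltac:(lia) ltac:(lia) (col_dec HIX).
have [A3 A4] := chain_dec_mid (f := fun i => Y i 1) (lo := 1) (hi := n.+2) (i := i)
   ltac:(lia) ltac:(lia) (col_dec HIY).
rewrite /= HTX // in A1; rewrite /= HTY // in A3; lia.
Qed.

Theorem theorem11p1 (n : nat) (hn : 1 <= n) :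
  (forall i j : nat,
     (exists X, [/\ Gog n X, inversions n X = i & coinversions n X = j])
     <-> in_A n i j) /\
  (forall k : nat, k <= n - 1 ->
     exists X,
       [/\ Gog n X,
           inversions n X = (k * k.+1)./2,
           coinversions n X = ((n - k - 1) * (n - k))./2,
           X 1 1 = n - k &
           forall Y, Gog n Y ->
             inversions n Y = (k * k.+1)./2 ->
             coinversions n Y = ((n - k - 1) * (n - k))./2 ->
             forall a b, in_tri n a b -> Y a b = X a b]).
Proof.
split.
  move=> i j; split.
    by move=> [X [HG <- <-]]; exact: gog_inA.
  by move=> HA; exact: exist_A.
move=> k Hk.
have [X [HG HI HC]] := exist_corner Hk hn.
case: n hn Hk HG HI HC => [|n] // _ Hk HG HI HC.
have Hk' : k <= n by lia.
have CX : cond n.+1 0 X k.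
  by split; [exact: gog_interl | exact: gog_top | rewrite HI | rewrite HC].
exists X; rewrite h1 h2; split => //.
  by rewrite (bottom Hk' CX) addn0.
move=> Y HGY HIY HCY a b Ht.
have CY : cond n.+1 0 Y k.
  by split; [exact: gog_interl | exact: gog_top | rewrite HIY | rewrite HCY].
have := uniq_corner Hk' CY CX Ht; rewrite !addn0 => //.
Qed.
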